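(* Let $k\ge2$, let $r_1,\dots,r_k$ be positive integers and let $a\le b$ be positive integers. Then \[ N_k(r_1,\dots,r_k;a)\,N_k(r_1,\dots,r_k;b)\le N_k^{(1)}(r_1,\dots,r_k;a,b)\,N_k^{(1)}(r_1,\dots,r_k;b,a). \]
   Context: $K(r_1,\dots,r_k)$ is the complete $k$-partite graph with parts $V_1,\dots,V_k$ of sizes $r_1,\dots,r_k$. $N_k(r_1,\dots,r_k;c)$ is the number of proper colourings of $K(r_1,\dots,r_k)$ with colours from a set of size $c$. Fix sets $A\subseteq B$ with $|A|=a$, $|B|=b$. $N_k^{(1)}(r_1,\dots,r_k;a,b)$ is the number of proper colourings of $K(r_1,\dots,r_k)$ in which $V_1$ receives colours from $A$ and $V_2,\dots,V_k$ receive colours from $B$; $N_k^{(1)}(r_1,\dots,r_k;b,a)$ is the number of proper colourings in which $V_1$ receives colours from $B$ and $V_2,\dots,V_k$ receive colours from $A$. *)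

(* Defs.v *)
From mathcomp Require Import all_boot.
Set Implicit Arguments. Unset Strict Implicit. Unset Printing Implicit Defensive.

(* Vertex set of the complete k-partite graph K(r_1,...,r_k): a vertex is a
   pair (i, j) with i : 'I_k the index of its part and j : 'I_(r i).
   Part V_1 of the paper is the part with index 0. *)
Definition vert (k : nat) (r : 'I_k -> nat) : finType :=
  {i : 'I_k & 'I_(r i)}.

Definition kp_adj k (r : 'I_k -> nat) (u v : vert r) : bool := tag u != tag v.

Definition proper k (r : 'I_k -> nat) (C : finType) (f : {ffun vert r -> C}) : bool :=
  [forall u, forall v, kp_adj u v ==> (f u != f v)].

Definition Nk k (r : 'I_k -> nat) (c : nat) : nat :=
  #|[set f : {ffun vert r -> 'I_c} | proper f]|.

Definition Nk1 k (r : 'I_k -> nat) (C : finType) (X Y : {set C}) : nat :=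
  #|[set f : {ffun vert r -> C} | proper f &&
      [forall v, f v \in (if val (tag v) == 0 then X else Y)]]|.

(* Main.v *)
Require Import Defs.
From mathcomp Require Import all_boot all_fingroup zify.
Set Implicit Arguments. Unset Strict Implicit. Unset Printing Implicit Defensive.

Lemma foldr_prod (T : finType) (F : T -> nat) :
  foldr muln 1 [seq F x | x : T] = \prod_(x : T) F x.
Proof.
have -> : forall s : seq nat, foldr muln 1 s = \prod_(i <- s) i.
  by elim=> [|x s IH]; rewrite ?big_nil ?big_cons //= IH.
by rewrite /image_mem big_map enumT.
Qed.

Definition key k (r : 'I_k -> nat) (C : finType) (f : {ffun vert r -> C}) :
  {ffun vert r -> option C} :=
  [ffun v => if val (tag v) == 0 then None else Some (f v)].

Definition Kset k (r : 'I_k -> nat) (C : finType) (Y : {set C}) :=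
  [set rho : {ffun vert r -> option C} |
    [forall v, if val (tag v) == 0 then rho v == None
               else (if rho v is Some c then c \in Y else false)] &&
    [forall u, forall v, ((tag u != tag v) && (val (tag u) != 0) && (val (tag v) != 0))
                          ==> (rho u != rho v)]].

Definition im k (r : 'I_k -> nat) (C : finType) (rho : {ffun vert r -> option C}) : {set C} :=
  [set c | [exists v, rho v == Some c]].

Definition Pset k (r : 'I_k -> nat) (C : finType) (X Y : {set C}) :=
  [set f : {ffun vert r -> C} | Defs.proper f &&
      [forall v, f v \in (if val (tag v) == 0 then X else Y)]].

Definition n0 k (r : 'I_k -> nat) := #|[pred v : vert r | val (tag v) == 0]|.

Definition Dom k (r : 'I_k -> nat) (C : finType) (X : {set C}) (rho : {ffun vert r -> option C}) (v : vert r) : {set C} :=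
  if val (tag v) == 0 then X :\: im rho
  else if rho v is Some c then [set c] else set0.

Lemma KsetP k (r : 'I_k -> nat) (C : finType) (Y : {set C}) rho :
  rho \in Kset r Y ->
  (forall v, val (tag v) == 0 -> rho v = None) /\
  (forall v, val (tag v) != 0 -> exists2 c, rho v = Some c & c \in Y) /\
  (forall u v, tag u != tag v -> val (tag u) != 0 -> val (tag v) != 0 -> rho u != rho v).
Proof.
rewrite inE => /andP[/forallP H1 /forallP H2]; split; [|split].
- by move=> v h; have := H1 v; rewrite h => /eqP.
- move=> v h; have := H1 v; rewrite (negbTE h); case: (rho v) => // c ?; by exists c.
- by move=> u v h1 h2 h3; have /forallP/(_ v) := H2 u; rewrite h1 h2 h3.
Qed.

Lemma fibre k (r : 'I_k -> nat) (C : finType) (X Y : {set C}) rho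
  (f : {ffun vert r -> C}) : rho \in Kset r Y ->
  ((f \in Pset r X Y) && (key f == rho)) = [forall v, f v \in Dom X rho v].
Proof.
move=> /KsetP [K1 [K2 K3]].
apply/andP/forallP.
- case; rewrite inE => /andP[/forallP pf /forallP inf] /eqP kf v.
  rewrite /Dom; case: ifP => h.
  + rewrite inE; have := inf v; rewrite h => ->; rewrite andbT.
    rewrite inE; apply/existsP => -[u /eqP].
    rewrite -kf ffunE; case: ifP => // hu [fu].
    have /forallP/(_ v) := pf u; rewrite /kp_adj fu eqxx implybF.
    apply/negP/negPn; apply/negP => /eqP tuv.
    by move/negbT: hu; rewrite tuv h.
  + by rewrite -kf ffunE h inE.
- move=> H; split; last first.
    apply/eqP/ffunP => v; rewrite ffunE; have := H v; rewrite /Dom.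
    case: ifP => h; first by rewrite K1.
    by have [c -> _] := K2 v (negbT h); rewrite inE => /eqP ->.
  rewrite inE; apply/andP; split.
  + apply/forallP => u; apply/forallP => v; apply/implyP => tuv.
    have Hu := H u; have Hv := H v; move: Hu Hv; rewrite /Dom.
    case: ifP => hu; case: ifP => hv.
    * move: tuv; rewrite /kp_adj => /negP; case; apply/eqP/val_inj.
      by rewrite (eqP hu) (eqP hv).
    * have [c cv _] := K2 v (negbT hv); rewrite cv !inE => /andP[Hu _] /eqP ->.
      move: Hu; apply: contra => /eqP ->.
      by apply/existsP; exists v; rewrite cv.
    * have [c cu _] := K2 u (negbT hu); rewrite cu !inE => /eqP -> /andP[Hv _].
      move: Hv; apply: contra => /eqP <-.
      by apply/existsP; exists u; rewrite cu.
    * have [c cu _] := K2 u (negbT hu); have [d dv _] := K2 v (negbT hv).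
      rewrite cu dv !inE => /eqP -> /eqP ->.
      by have := K3 u v tuv (negbT hu) (negbT hv); rewrite cu dv; apply: contra => /eqP ->.
  + apply/forallP => v; have := H v; rewrite /Dom; case: ifP => h.
    * by rewrite inE => /andP[_].
    * by have [c cv cY] := K2 v (negbT h); rewrite cv inE => /eqP ->.
Qed.

Lemma expn_mono m1 m2 e : m1 <= m2 -> m1 ^ e <= m2 ^ e.
Proof. by move=> h; case: e => // e; rewrite leq_exp2r. Qed.

Lemma cheb (I : finType) (P : {set I}) (y : I -> nat) n :
  (\sum_(i in P) y i) * (\sum_(i in P) y i ^ n) <= #|P| * \sum_(i in P) y i ^ n.+1.
Proof.
have pair i j : y i * y j ^ n + y j * y i ^ n <= y i ^ n.+1 + y j ^ n.+1.
  wlog h : i j / y i <= y j.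
    move=> W; case: (leqP (y i) (y j)) => h; first exact: W.
    by rewrite addnC [X in _ <= X]addnC; apply: W; apply: ltnW.
  have := expn_mono n h; rewrite !expnS.
  move: (y i ^ n) (y j ^ n) (y i) (y j) h => p q a b h1 h2; nia.
rewrite -(@leq_pmul2l 2) //.
have E : (\sum_(i in P) y i) * (\sum_(i in P) y i ^ n) =
         \sum_(i in P) \sum_(j in P) y i * y j ^ n.
  by rewrite big_distrl /=; apply: eq_bigr => i _; rewrite big_distrr.
have E2 : \sum_(i in P) \sum_(j in P) y i * y j ^ n =
          \sum_(i in P) \sum_(j in P) y j * y i ^ n by rewrite exchange_big.
rewrite mul2n -addnn E {2}E2 -big_split /=.
rewrite (eq_bigr (fun i => \sum_(j in P) (y i * y j ^ n + y j * y i ^ n))); last first.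
  by move=> i _; rewrite -big_split.
apply: (@leq_trans (\sum_(i in P) \sum_(j in P) (y i ^ n.+1 + y j ^ n.+1))).
  by apply: leq_sum => i _; apply: leq_sum => j _; apply: pair.
rewrite (eq_bigr (fun i => \sum_(j in P) y i ^ n.+1 + \sum_(j in P) y j ^ n.+1)); last first.
  by move=> i _; rewrite big_split.
rewrite big_split /= (eq_bigr (fun i => #|P| * y i ^ n.+1)); last first.
  by move=> i _; rewrite sum_nat_const.
by rewrite -big_distrr /= sum_nat_const mul2n -addnn.
Qed.

Lemma power_mean (I : finType) (P : {set I}) (y : I -> nat) n :
  (\sum_(i in P) y i) ^ n * #|P| <= #|P| ^ n * \sum_(i in P) y i ^ n.
Proof.
elim: n => [|n IH]. rewrite !expn0 !mul1n; under eq_bigr do rewrite expn0; by rewrite sum1_card.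
rewrite expnS -mulnA; apply: leq_trans (leq_mul (leqnn _) IH) _.
rewrite mulnCA expnS [#|P| * _]mulnC -mulnA leq_mul2l; apply/orP; right; exact: cheb.
Qed.

Definition Pi (C : finType) (B : {set C}) :=
  [set p : {perm C} | [forall x, (x \notin B) ==> (p x == x)]].

Lemma PiP (C : finType) (B : {set C}) p x :
  p \in Pi B -> x \notin B -> p x = x.
Proof. by rewrite inE => /forallP /(_ x) /implyP H /H /eqP. Qed.

Lemma Pi_in (C : finType) (B : {set C}) p x :
  p \in Pi B -> x \in B -> p x \in B.
Proof.
move=> pP xB; apply/negPn/negP => h.
have := PiP pP h => /perm_inj E; by move: h; rewrite E xB.
Qed.

Lemma Pi1 (C : finType) (B : {set C}) : (1%g : {perm C}) \in Pi B.
Proof. by rewrite inE; apply/forallP => x; rewrite perm1 eqxx implybT. Qed.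

Lemma PiV (C : finType) (B : {set C}) p : p \in Pi B -> (p^-1)%g \in Pi B.
Proof.
move=> pP; rewrite inE; apply/forallP => x; apply/implyP => h.
by rewrite -{1}(PiP pP h) permK.
Qed.

Lemma Pi_tperm (C : finType) (B : {set C}) p x x' :
  p \in Pi B -> x \in B -> x' \in B -> (p * tperm x x')%g \in Pi B.
Proof.
move=> pP xB x'B; rewrite inE; apply/forallP => z; apply/implyP => h.
rewrite permM (PiP pP h) tpermD //; apply/eqP => E; move: h; by rewrite -E ?xB ?x'B.
Qed.

Definition cnt (C : finType) (B : {set C}) y x := #|[set p in Pi B | p y == x]|.

Lemma cnt_le (C : finType) (B : {set C}) y x x' :
  x \in B -> x' \in B -> cnt B y x <= cnt B y x'.
Proof.
move=> xB x'B; rewrite /cnt.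
rewrite -(card_imset _ (mulIg (tperm x x'))).
apply: subset_leq_card; apply/subsetP => q /imsetP [p]; rewrite inE => /andP[pP /eqP pyx] ->.
by rewrite inE Pi_tperm //= permM pyx tpermL eqxx.
Qed.

Lemma cnt_const (C : finType) (B : {set C}) y x x' :
  x \in B -> x' \in B -> cnt B y x = cnt B y x'.
Proof. by move=> h1 h2; apply/eqP; rewrite eqn_leq !cnt_le. Qed.

Lemma cnt_sum (C : finType) (A B : {set C}) y :
  y \in B -> A \subset B ->
  #|[set p in Pi B | p y \in A]| = #|A| * cnt B y y.
Proof.
move=> yB AB.
rewrite -sum1_card (partition_big (fun p : {perm C} => p y) (mem A)); last first.
  by move=> p; rewrite inE => /andP[].
rewrite -sum_nat_const; apply: eq_bigr => x xA.
rewrite -(cnt_const y (subsetP AB x xA) yB) /cnt.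
rewrite -sum1_card; apply: eq_bigl => p; rewrite [in LHS]inE [in RHS]inE.
by case: (p \in Pi B); rewrite /= ?andbF //; case: eqP => [->|]; rewrite ?xA ?andbF ?andbT.  
Qed.

Lemma count_b (C : finType) (A B : {set C}) y :
  y \in B -> A \subset B ->
  #|B| * #|[set p in Pi B | p y \in A]| = #|A| * #|Pi B|.
Proof.
move=> yB AB; rewrite (cnt_sum yB AB) mulnCA; congr (_ * _).
have := cnt_sum yB (subxx B); rewrite (_ : [set p in Pi B | p y \in B] = Pi B).
  by move=> ->.
by apply/setP => p; rewrite [in LHS]inE; case pP: (p \in Pi B) => //=; rewrite (Pi_in pP yB).
Qed.

Lemma key_in k (r : 'I_k -> nat) (C : finType) (X Y : {set C}) f :
  f \in Pset r X Y -> key f \in Kset r Y.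
Proof.
rewrite !inE => /andP[/forallP pf /forallP inf]; apply/andP; split.
  apply/forallP => v; rewrite ffunE; case: ifP => h; first by rewrite h.
  by have := inf v; rewrite h.  
apply/forallP => u; apply/forallP => v; apply/implyP => /andP[/andP[tuv hu] hv].
rewrite !ffunE (negbTE hu) (negbTE hv); have /forallP/(_ v) := pf u.
by rewrite /kp_adj tuv /=; apply: contra => /eqP [->].
Qed.

Lemma decomp k (r : 'I_k -> nat) (C : finType) (X Y : {set C}) :
  #|Pset r X Y| = \sum_(rho in Kset r Y) #|X :\: im rho| ^ n0 r.
Proof.
rewrite -sum1_card (partition_big (@key _ r C) (mem (Kset r Y))); last first.
  by move=> f; apply: key_in.
apply: eq_bigr => rho Krho.
rewrite (eq_bigl (fun f => f \in family (fun v => Dom X rho v))); last first.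
  move=> f /=; rewrite fibre //; apply/forallP/familyP => H v; exact: H v.
rewrite sum1_card card_family foldr_prod.
rewrite (bigID (fun v => val (tag v) == 0)) /=.
rewrite [X in _ * X]big1 ?muln1; last first.
  move=> v /negbTE h; rewrite /Dom h.
  by have /KsetP[_ [K2 _]] := Krho; have [c -> _] := K2 v (negbT h); rewrite cards1.
rewrite (eq_bigr (fun _ => #|X :\: im rho|)); last by move=> v h; rewrite /Dom h.
by rewrite prod_nat_const.
Qed.

Lemma Nk_Pset k (r : 'I_k -> nat) (C : finType) (A : {set C}) x0 :
  x0 \in A -> Nk r #|A| = #|Pset r A A|.
Proof.
move=> x0A.
pose phi (f : {ffun vert r -> 'I_#|A|}) : {ffun vert r -> C} :=
  [ffun v => enum_val (f v)].
have phi_inj : injective phi.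
  move=> f g /ffunP H; apply/ffunP => v; have := H v; rewrite !ffunE.
  exact: enum_val_inj.
rewrite /Nk -(card_imset _ phi_inj); apply: eq_card => g.
apply/imsetP/idP.
- case=> f; rewrite !inE /Defs.proper => pf ->; apply/andP; split.
    apply/forallP => u; apply/forallP => v; apply/implyP => huv.
    have := implyP (forallP (forallP pf u) v) huv.
    by rewrite /phi !ffunE; apply: contra => /eqP /enum_val_inj ->.
  by apply/forallP => v; rewrite /phi ffunE; case: ifP => _; apply: enum_valP.
- rewrite inE /Defs.proper => /andP[pg /forallP ing].
  have gA v : g v \in A by have := ing v; case: ifP.
  exists [ffun v => enum_rank_in x0A (g v)].
    rewrite inE; apply/forallP => u; apply/forallP => v; apply/implyP => huv.
    have := implyP (forallP (forallP pg u) v) huv.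
    rewrite !ffunE; apply: contra => /eqP E; apply/eqP.
    by rewrite -(enum_rankK_in x0A (gA u)) -(enum_rankK_in x0A (gA v)) E.
  by apply/ffunP => v; rewrite /phi !ffunE enum_rankK_in.
Qed.

Lemma card_sum (T : finType) (D : {set T}) (Q : pred T) :
  #|[set y in D | Q y]| = \sum_(y in D) Q y.
Proof.
rewrite -sum1_card big_mkcond [RHS]big_mkcond; apply: eq_bigr => y _.
by rewrite inE; case: (y \in D); case: (Q y).
Qed.

Lemma diff_card (C : finType) (A B S : {set C}) p :
  A \subset B -> p \in Pi B ->
  #|A :\: p @: S| = #|[set y in B :\: S | p y \in A]|.
Proof.
move=> AB pP; transitivity #|p @: [set y in B :\: S | p y \in A]|; last exact: (card_imset _ (@perm_inj _ p)).
apply: eq_card => x.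
apply/idP/imsetP.
- rewrite inE => /andP[xS xA]; exists ((p^-1)%g x); last by rewrite permKV.
  rewrite !inE permKV xA andbT (Pi_in (PiV pP) (subsetP AB x xA)) andbT.
  apply: contra xS => h; by rewrite -(permKV p x) imset_f.
- case=> y; rewrite !inE => /andP[/andP[yS yB] pyA] ->; rewrite pyA andbT.
  apply/imsetP => -[z zS /perm_inj E]; move: yS; by rewrite E zS.
Qed.

Lemma sum_Pi (C : finType) (A B S : {set C}) :
  A \subset B ->
  #|B| * \sum_(p in Pi B) #|A :\: p @: S| = #|A| * #|B :\: S| * #|Pi B|.
Proof.
move=> AB.
rewrite (eq_bigr (fun p : {perm C} => \sum_(y in B :\: S) (p y \in A))); last first.
  by move=> p pP; rewrite (diff_card S AB pP) card_sum.
rewrite exchange_big big_distrr /=.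
rewrite (eq_bigr (fun _ => #|A| * #|Pi B|)); last first.
  move=> y; rewrite inE => /andP[_ yB]; rewrite -(count_b yB AB) -card_sum.
  congr (_ * #|_|); apply/setP => p; by rewrite !inE.
by rewrite sum_nat_const mulnA [#|B :\: S| * _]mulnC.
Qed.

Definition act k (r : 'I_k -> nat) (C : finType) (p : {perm C})
  (rho : {ffun vert r -> option C}) : {ffun vert r -> option C} :=
  [ffun v => omap p (rho v)].

Lemma actK k (r : 'I_k -> nat) (C : finType) (p : {perm C}) :
  cancel (@act k r C p) (act (p^-1)%g).
Proof.
move=> rho; apply/ffunP => v; rewrite !ffunE; case: (rho v) => //= c.
by rewrite permK.
Qed.

Lemma act_inj k (r : 'I_k -> nat) (C : finType) (p : {perm C}) :
  injective (@act k r C p).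
Proof. exact: can_inj (actK p). Qed.

Lemma act_K k (r : 'I_k -> nat) (C : finType) (B : {set C}) p rho :
  p \in Pi B -> rho \in Kset r B -> act p rho \in Kset r B.
Proof.
move=> pP /KsetP [K1 [K2 K3]]; rewrite inE; apply/andP; split.
  apply/forallP => v; rewrite ffunE; case: ifP => h; first by rewrite K1.
  by have [c -> cB] := K2 v (negbT h); rewrite /= Pi_in.
apply/forallP => u; apply/forallP => v; apply/implyP => /andP[/andP[tuv hu] hv].
rewrite !ffunE; have := K3 u v tuv hu hv.
have [c -> _] := K2 u hu; have [d -> _] := K2 v hv => /=.
by apply: contra => /eqP [/perm_inj ->].
Qed.

Lemma act_KE k (r : 'I_k -> nat) (C : finType) (B : {set C}) p rho :
  p \in Pi B -> (act p rho \in Kset r B) = (rho \in Kset r B).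
Proof.
move=> pP; apply/idP/idP; last exact: act_K.
by move=> h; rewrite -(actK p rho); apply: act_K => //; apply: PiV.
Qed.

Lemma act_im k (r : 'I_k -> nat) (C : finType) (p : {perm C}) rho :
  im (@act k r C p rho) = p @: im rho.
Proof.
apply/setP => c; rewrite inE; apply/existsP/imsetP.
- case=> v; rewrite ffunE; case E: (rho v) => [d|] //= /eqP [<-].
  by exists d => //; rewrite inE; apply/existsP; exists v; rewrite E.
- case=> d; rewrite inE => /existsP [v /eqP E] ->; exists v.
  by rewrite ffunE E.
Qed.

Lemma im_sub k (r : 'I_k -> nat) (C : finType) (Y : {set C}) rho :
  rho \in Kset r Y -> im rho \subset Y.
Proof.
move=> /KsetP [K1 [K2 _]]; apply/subsetP => c; rewrite inE => /existsP [v /eqP E].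
case: (boolP (val (tag v) == 0)) => h; first by move: E; rewrite K1.
by have [d E' dY] := K2 v h; move: E; rewrite E' => -[<-].
Qed.

Lemma sum_act k (r : 'I_k -> nat) (C : finType) (B : {set C}) p (F : _ -> nat) :
  p \in Pi B ->
  \sum_(rho in Kset r B) F (act p rho) = \sum_(rho in Kset r B) F rho.
Proof.
move=> pP; rewrite [RHS](reindex_inj (@act_inj k r C p)) /=.
by apply: eq_bigl => rho; rewrite act_KE.
Qed.

Lemma avg k (r : 'I_k -> nat) (C : finType) (B : {set C}) c (F : _ -> nat) :
  #|Pi B| * (c * \sum_(rho in Kset r B) F rho) =
  \sum_(rho in Kset r B) \sum_(p in Pi B) c * F (act p rho).
Proof.
rewrite exchange_big /= -sum_nat_const; apply: eq_bigr => p pP.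
by rewrite big_distrr /= -(sum_act _ pP).
Qed.

Lemma Pi_gt0 (C : finType) (B : {set C}) : 0 < #|Pi B|.
Proof. by apply/card_gt0P; exists 1%g; apply: Pi1. Qed.

Lemma per_sigma k (r : 'I_k -> nat) (C : finType) (A B : {set C}) rho n :
  A \subset B -> rho \in Kset r B ->
  \sum_(p in Pi B) #|A| ^ n * #|B :\: im (act p rho)| ^ n <=
  \sum_(p in Pi B) #|B| ^ n * #|A :\: im (act p rho)| ^ n.
Proof.
move=> AB Krho; set S := im rho; have SB : S \subset B by apply: im_sub Krho.
set m := #|B :\: S|.
rewrite (eq_bigr (fun _ => #|A| ^ n * m ^ n)); last first.
  move=> p pP; rewrite act_im /m. have Hs : p @: im rho \subset B by apply/subsetP => x /imsetP [y yS ->]; apply: Pi_in pP _; exact: (subsetP SB). rewrite (cardsDS Hs) (cardsDS SB) card_imset //; exact: perm_inj.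
rewrite sum_nat_const -big_distrr /=.
under eq_bigr do rewrite act_im.
set P := #|Pi B|.
have H1 := sum_Pi S AB; rewrite -/P -/m in H1.
have H2 := power_mean (Pi B) (fun p => #|A :\: p @: S|) n; rewrite -/P in H2.
move: H1 H2.
set Y := \sum_(p in Pi B) _; set Z := \sum_(p in Pi B) _.
move=> H1 H2.
have Pn : 0 < P ^ n by rewrite expn_gt0 Pi_gt0.
rewrite -(leq_pmul2l Pn).
have -> : P ^ n * (P * (#|A| ^ n * m ^ n)) = #|B| ^ n * (Y ^ n * P).
  have E : #|B| ^ n * Y ^ n = (#|A| * m * P) ^ n by rewrite -expnMn H1.
  by rewrite [RHS]mulnA E !expnMn; nia.
by rewrite [X in _ <= X]mulnCA leq_mul2l H2 orbT.
Qed.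

Lemma KC k (r : 'I_k -> nat) (C : finType) (A B : {set C}) n :
  A \subset B ->
  #|A| ^ n * \sum_(rho in Kset r B) #|B :\: im rho| ^ n <=
  #|B| ^ n * \sum_(rho in Kset r B) #|A :\: im rho| ^ n.
Proof.
move=> AB; rewrite -(leq_pmul2l (Pi_gt0 B)) !avg.
by apply: leq_sum => rho Krho; apply: per_sigma.
Qed.

Theorem lemma6p4 (k : nat) (r : 'I_k -> nat) (C : finType) (A B : {set C}) :
  2 <= k ->
  (forall i, 0 < r i) ->
  0 < #|A| ->
  A \subset B ->
  Nk r #|A| * Nk r #|B| <= Nk1 r A B * Nk1 r B A.
Proof.
move=> _ _ Apos AB.
have [x0 x0A] := card_gt0P Apos.
have x0B := subsetP AB x0 x0A.
rewrite (Nk_Pset r x0A) (Nk_Pset r x0B).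
have -> : Nk1 r A B = #|Pset r A B| by [].
have -> : Nk1 r B A = #|Pset r B A| by [].
rewrite !decomp.
have HK := KC r (n0 r) AB.
move: HK.
set NB := \sum_(rho in Kset r B) #|B :\: im rho| ^ n0 r.
set NAB := \sum_(rho in Kset r B) #|A :\: im rho| ^ n0 r.
move=> HK.
rewrite big_distrl [X in _ <= X]mulnC big_distrl /=.
apply: leq_sum => rho Krho.
have TA := im_sub Krho.
have TB : im rho \subset B by apply: subset_trans TA AB.
rewrite (cardsDS TA) (cardsDS TB).
have tA : #|im rho| <= #|A| by apply: subset_leq_card.
have ab : #|A| <= #|B| by apply: subset_leq_card.
set a := #|A| in HK Apos tA ab *; set b := #|B| in HK ab *; set t := #|im rho| in tA *.
set n := n0 r in HK *.
have an : 0 < a ^ n by rewrite expn_gt0 Apos.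
rewrite -(leq_pmul2l an) mulnCA.
apply: leq_trans (leq_mul (leqnn _) HK) _.
rewrite mulnA -expnMn [X in _ <= X]mulnA [a ^ n * _]mulnC -expnMn.
apply: leq_mul (leqnn _).
apply: expn_mono.
nia.
Qed.
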